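(* If $R$ is a saturated transfer system on a finite modular lattice $M$, then the set $R_{cov}$ of covering relations of $M$ contained in $R$ is a saturated cover.
   Context: A lattice $M$ is modular if $a\le b$ implies $a\vee(x\wedge b)=(a\vee x)\wedge b$. A transfer system on a finite lattice $(P,\le)$ is a partial order $R$ refining $\le$ closed under restriction: $x\,R\,z$ and $y\le z$ imply $(x\wedge y)\,R\,y$; it is saturated if $x\,R\,y$, $y\le z$ and $x\,R\,z$ imply $y\,R\,z$. A covering diamond is a quadruple $x,y,x\wedge y,x\vee y$ with $x\ne y$ such that $x\vee y$ covers $x$ and $y$ and both $x,y$ cover $x\wedge y$. A saturated cover on $M$ is a set $Q$ of covering relations of $M$ such that (1) for all $x,y$, if $x\,Q\,(x\vee y)$ then $(x\wedge y)\,Q\,y$; (2) for every covering diamond, if three of its four covering relations lie in $Q$, so does the fourth. *)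

(* Defs.v *)
From HB Require Import structures.
From mathcomp Require Import all_boot all_order.
Set Implicit Arguments. Unset Strict Implicit. Unset Printing Implicit Defensive.
Import Order.Theory.
Local Open Scope order_scope.

Definition modular_lattice d (M : latticeType d) : Prop :=
  forall a b x : M, a <= b -> a `|` (x `&` b) = (a `|` x) `&` b.

Definition covers d (M : porderType d) (x y : M) : Prop :=
  x < y /\ ~ (exists z : M, x < z /\ z < y).

Definition transfer_system d (P : latticeType d) (R : P -> P -> Prop) : Prop :=
  [/\ (forall x, R x x),
      (forall x y, R x y -> R y x -> x = y),
      (forall x y z, R x y -> R y z -> R x z),
      (forall x y, R x y -> x <= y) &
      (forall x y z, R x z -> y <= z -> R (x `&` y) y)].

Definition saturated d (P : latticeType d) (R : P -> P -> Prop) : Prop :=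
  forall x y z, R x y -> y <= z -> R x z -> R y z.

Definition covering_diamond d (M : latticeType d) (x y : M) : Prop :=
  [/\ x != y, covers x (x `|` y), covers y (x `|` y),
      covers (x `&` y) x & covers (x `&` y) y].

Definition saturated_cover d (M : latticeType d) (Q : M -> M -> Prop) : Prop :=
  [/\ (forall x y, Q x y -> covers x y),
      (forall x y, Q x (x `|` y) -> Q (x `&` y) y) &
      (forall x y, covering_diamond x y ->
         let a := Q (x `&` y) x in let b := Q (x `&` y) y in
         let c := Q x (x `|` y) in let e := Q y (x `|` y) in
         (b -> c -> e -> a) /\ (a -> c -> e -> b) /\
         (a -> b -> e -> c) /\ (a -> b -> c -> e))].

Definition Rcov d (M : latticeType d) (R : M -> M -> Prop) : M -> M -> Prop :=
  fun x y => covers x y /\ R x y.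

(* Main.v *)
Require Import Defs.
From mathcomp Require Import all_boot all_order.
Import Order.Theory.
Local Open Scope order_scope.

Theorem proposition3p6 (d : Order.disp_t) (M : finLatticeType d)
  (R : M -> M -> Prop) :
  modular_lattice M -> transfer_system R -> saturated R ->
  saturated_cover (Rcov R).
Proof.
move=> Hmod [Hrefl Hanti Htrans Hle Hres] Hsat.
split.
- by move=> x y [].
- move=> x y [[Hc Hn] HR]; split; last first.
exact: (Hres x y (x `|` y) HR (leUr y x)).
  split.
  + rewrite lt_neqAle leIr andbT; apply/negP => /eqP E.
    have yx : y <= x by rewrite -E leIl.
    have : x `|` y <= x by rewrite leUx lexx yx.
    by rewrite (lt_geF Hc).
  + move=> [z [h1 h2]].
    have zxy : z <= x `|` y by apply: le_trans (ltW h2) (leUr _ _).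
    case: (eqVneq (x `|` z) x) => E.
    * have zx : z <= x by rewrite -E leUr.
      have : z <= x `&` y by rewrite lexI zx (ltW h2).
      by rewrite (lt_geF h1).
    * case: (eqVneq (x `|` z) (x `|` y)) => E2.
      - have := Hmod z y x (ltW h2).
        rewrite join_l; last exact: ltW.
        rewrite joinC E2 meet_r ?leUr // => Ezy.
        by rewrite Ezy ltxx in h2.
      - apply: Hn; exists (x `|` z); split.
        + by rewrite lt_neqAle eq_sym E leUl.
        + by rewrite lt_neqAle E2 leUx leUl zxy.
- move=> x y [_ cx cy cmx cmy] /=.
  split; [|split; [|split]].
  + move=> _ _ [_ Hy]; split=> //.
    by have := Hres _ _ _ Hy (leUl x y); rewrite meetC.
  + move=> _ [_ Hx] _; split=> //.
    exact: (Hres _ _ _ Hx (leUr y x)).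
  + move=> [_ Ha] [_ Hb] [_ He]; split=> //.
    apply: (Hsat _ _ _ Ha (leUl x y)); exact: Htrans Hb He.
  + move=> [_ Ha] [_ Hb] [_ Hc]; split=> //.
    apply: (Hsat _ _ _ Hb (leUr y x)); exact: Htrans Ha Hc.
Qed.
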